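(* Let $\mathbb{F}$ be a finite field or $\mathbb{R}$, $\Delta>1$ and $D\le n$. For an $m\times n$ matrix $M$ over $\mathbb{F}$ which can $\Delta$-approximate the sparsity $d=\|\mathbf{x}\|_0$ of any $\mathbf{x}\in\mathbb{F}^n$ with sparsity at most $D$ from $M\mathbf{x}$, it is necessary that $$\mathrm{rank}\,M\ \ge\ n-\max_{V\ (\Delta,D)\text{-distinguishing}}\dim(V).$$
   Context: $M\mathbf{x}$ is the ordinary matrix-vector product over $\mathbb{F}$; $\|\mathbf{x}\|_0$ is the number of nonzero entries. $M$ can $\Delta$-approximate $d$ if a deterministic decoder given only $M\mathbf{x}$ outputs $\hat d$ with $\frac1\Delta\le\hat d/d\le\Delta$ for all $\mathbf{x}$ with $\|\mathbf{x}\|_0\le D$. A subspace $V\subseteq\mathbb{F}^n$ is $(\Delta,D)$-distinguishing if any two vectors $\mathbf{x},\mathbf{y}$ in the same coset of $V$ with $\|\mathbf{x}\|_0\le\|\mathbf{y}\|_0\le D$ satisfy $\|\mathbf{y}\|_0\le\Delta^2\|\mathbf{x}\|_0$. *)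

(* Defs.v *)
From HB Require Import structures.
From mathcomp Require Import all_boot all_order all_algebra.
From mathcomp Require Import boolp.
From mathcomp Require Import Rstruct.
From Stdlib Require Rdefinitions.
Notation R := Rdefinitions.R.
Set Implicit Arguments. Unset Strict Implicit. Unset Printing Implicit Defensive.
Import Order.TTheory GRing.Theory Num.Theory.
Local Open Scope ring_scope.

Definition sparsity (F : fieldType) (n : nat) (x : 'cV[F]_n) : nat :=
  #|[set i : 'I_n | x i 0 != 0]|.

(* M can Delta-approximate d = ||x||_0 for all x with ||x||_0 <= D:
   a deterministic decoder, seeing only M x, outputs a real d^ with
   1/Delta <= d^/d <= Delta, written multiplicatively
   d/Delta <= d^ <= Delta*d  (so d = 0 forces d^ = 0). *)
Definition can_approx (F : fieldType) (m n : nat) (M : 'M[F]_(m, n))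
    (Delta : R) (D : nat) : Prop :=
  exists dec : 'cV[F]_m -> R,
    forall x : 'cV[F]_n, (sparsity x <= D)%N ->
      (sparsity x)%:R / Delta <= dec (M *m x) /\
      dec (M *m x) <= Delta * (sparsity x)%:R.

(* A subspace V of F^n is represented as the row space of a square matrix
   V : 'M_n (mxalgebra); x (column vector) lies in V iff (x^T <= V)%MS.
   x, y lie in the same coset of V iff x - y lies in V. *)
Definition distinguishing (F : fieldType) (n : nat) (Delta : R) (D : nat)
    (V : 'M[F]_n) : Prop :=
  forall x y : 'cV[F]_n,
    ((x - y)^T <= V)%MS ->
    (sparsity x <= sparsity y)%N -> (sparsity y <= D)%N ->
    (sparsity y)%:R <= Delta ^+ 2 * (sparsity x)%:R.

Definition max_dist_dim (F : fieldType) (n : nat) (Delta : R) (D : nat) : nat :=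
  \max_(k < n.+1 |
        `[< exists V : 'M[F]_n, distinguishing Delta D V /\ \rank V = k >]) k.

Definition theorem7_for (F : fieldType) : Prop :=
  forall (m n : nat) (M : 'M[F]_(m, n)) (Delta : R) (D : nat),
    1 < Delta -> (D <= n)%N ->
    can_approx M Delta D ->
    (n - max_dist_dim F n Delta D <= \rank M)%N.

(* Main.v *)
Require Import Defs.
From HB Require Import structures.
From mathcomp Require Import all_boot all_order all_algebra.
From mathcomp Require Import boolp.
From mathcomp Require Import Rstruct.
From Stdlib Require Rdefinitions.
Set Implicit Arguments. Unset Strict Implicit. Unset Printing Implicit Defensive.
Import Order.TTheory GRing.Theory Num.Theory.
Local Open Scope ring_scope.

Lemma gen (F : fieldType) : theorem7_for F.
Proof.
move=> m n M Delta D hD hDn [dec hdec].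
have Dpos : 0 < Delta by apply: lt_trans hD.
have dist : distinguishing Delta D (kermx M^T).
  move=> x y /sub_kermxP hxy hxy1 hy.
  have eq : M *m x = M *m y.
    apply/eqP; rewrite -subr_eq0 -mulmxBr; apply/eqP.
    by rewrite -[LHS]trmxK trmx_mul hxy linear0.
  have [h1 _] := hdec y hy.
  have [_ h2] := hdec x (leq_trans hxy1 hy).
  rewrite eq in h2.
  have h3 := le_trans h1 h2.
  rewrite ler_pdivrMr // in h3.
  by move: h3; rewrite expr2 mulrAC.
have hk : (n - \rank M < n.+1)%N by rewrite ltnS leq_subr.
have := @leq_bigmax_cond _ (fun k : 'I_n.+1 =>
   `[< exists V : 'M[F]_n, distinguishing Delta D V /\ \rank V = k >])
   (fun k : 'I_n.+1 => nat_of_ord k) (Ordinal hk).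
rewrite /max_dist_dim => H.
have {}H := H (asboolT (ex_intro _ (kermx M^T) (conj dist _))).
rewrite mxrank_ker mxrank_tr /= in H.
have {}H := H erefl.
rewrite leq_subLR; rewrite leq_subLR in H.
by rewrite addnC.
Qed.

Theorem theorem7 :
  (forall F : finFieldType, theorem7_for F) /\ theorem7_for Rdefinitions.R.
Proof. split; [move=> F; exact: gen | exact: gen]. Qed.
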